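(* Let $P=[\alpha^1,\dots,\alpha^d,I]$ be a tile and let $q\in\mathcal{Q}_{d-1}$ with $q(x_I^j)\in\alpha^j$ for all $j\in\{1,\dots,d\}$. Then $$\|q-q_P\|_{L^\infty(\tilde I)}\le c(d)\,|I|^{-1},$$ where $c(d)$ depends only on $d$.
   Context: Fix $d\in\mathbb{N}$. $\mathcal{Q}_{d-1}$ is the class of real polynomials of degree $\le d-1$. A tile is a $(d+1)$-tuple $P=[\alpha^1,\dots,\alpha^d,I]$ of dyadic half-open intervals, $I$ a dyadic subinterval of $[0,1]$ and $\alpha^j$ dyadic intervals of $\mathbb{R}$, with $|\alpha^j|=|I|^{-1}$. For dyadic $I$, the points $x_I^1,\dots,x_I^d$ are: $x_I^1,x_I^2$ the endpoints of $I$, $x_I^3=\frac{x_I^1+x_I^2}{2}$, $x_I^4=\frac{x_I^1+x_I^3}{2}$, $x_I^5=\frac{x_I^3+x_I^2}{2}$, and so on inductively (successive dyadic midpoints, generation by generation, left to right) until $d$ distinct points are obtained. The central polynomial $q_P\in\mathcal{Q}_{d-1}$ is the Lagrange interpolation polynomial with $q_P(x_I^j)=c(\alpha^j)$ (the center of $\alpha^j$) for all $j$, i.e. $q_P(y)=\sum_{j=1}^d\frac{\prod_{k\ne j}(y-x_I^k)}{\prod_{k\ne j}(x_I^j-x_I^k)}c(\alpha^j)$. $\tilde I=13I$ is the interval with the same center as $I$ and length $13|I|$. *)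

(* Defs.v *)
From Stdlib Require Import Rdefinitions.
From HB Require Import structures.
From mathcomp Require Import all_boot all_order all_algebra.
From mathcomp Require Import Rstruct.
Set Implicit Arguments. Unset Strict Implicit. Unset Printing Implicit Defensive.
Import Order.TTheory GRing.Theory Num.Theory.
Local Open Scope ring_scope.

(* I = [k 2^-n, (k+1) 2^-n) with n : nat, k < 2^n  (a dyadic subinterval of [0,1]);
   alpha^j = [m_j 2^n, (m_j+1) 2^n) with m_j : int  (dyadic, |alpha^j| = |I|^-1). *)
Record tile (d : nat) := Tile {
  tile_n : nat;
  tile_k : nat;
  tile_k_lt : (tile_k < 2 ^ tile_n)%N;
  tile_m : 'I_d -> int }.

Definition I_len d (P : tile d) : R := (2%:R ^+ tile_n P)^-1.
Definition I_left d (P : tile d) : R := (tile_k P)%:R * I_len P.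
Definition alpha_len d (P : tile d) : R := 2%:R ^+ tile_n P.
Definition alpha_left d (P : tile d) (j : 'I_d) : R := (tile_m P j)%:~R * alpha_len P.
Definition alpha_center d (P : tile d) (j : 'I_d) : R :=
  alpha_left P j + alpha_len P / 2%:R.
Definition in_alpha d (P : tile d) (j : 'I_d) (x : R) : Prop :=
  alpha_left P j <= x /\ x < alpha_left P j + alpha_len P.

(* Relative position in [0,1] of the j-th (0-based) point of the sequence
   0, 1, 1/2, 1/4, 3/4, 1/8, 3/8, 5/8, 7/8, ...
   (endpoints, then successive dyadic midpoints generation by generation,
   left to right). *)
Definition dyad_frac (j : nat) : R :=
  match j with
  | 0%N => 0
  | 1%N => 1
  | j'.+2 =>
      let h := trunc_log 2 j'.+1 in
      let i := (j'.+1 - 2 ^ h)%N in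
      (2 * i + 1)%N%:R / (2 ^ h.+1)%N%:R
  end.

(* x_I^{j+1} = left(I) + dyad_frac j * |I| *)
Definition xpt d (P : tile d) (j : 'I_d) : R := I_left P + dyad_frac j * I_len P.

(* Central polynomial q_P: Lagrange interpolant with q_P(x_I^j) = c(alpha^j). *)
Definition qP d (P : tile d) : {poly R} :=
  \sum_(j < d)
    (\prod_(k < d | k != j) ('X - (xpt P k)%:P)) *
    ((alpha_center P j / \prod_(k < d | k != j) (xpt P j - xpt P k))%:P).

(* Dilated interval ~I = 13 I (closed; same center as I, length 13|I|). *)
Definition in_tildeI d (P : tile d) (y : R) : Prop :=
  `|y - (I_left P + I_len P / 2%:R)| <= 13%:R * I_len P / 2%:R.

(* Main.v *)
Require Import Defs.
From Stdlib Require Import Rdefinitions.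
From HB Require Import structures.
From mathcomp Require Import all_boot all_order all_algebra.
From mathcomp Require Import Rstruct.
From mathcomp Require Import zify ring lra.
Set Implicit Arguments. Unset Strict Implicit. Unset Printing Implicit Defensive.
Import Order.TTheory GRing.Theory Num.Theory.
Local Open Scope ring_scope.

Lemma odd2pow (a b m n : nat) : ((2*a+1) * 2^m = (2*b+1) * 2^n)%N -> m = n.
Proof.
elim: m n => [|m IH] [|n] //=.
- rewrite expn0 expnS; set t := (2 ^ _)%N; nia.
- rewrite expn0 expnS; set t := (2 ^ _)%N; nia.
- rewrite !expnS mulnCA [((2*b+1) * _)%N]mulnCA => /eqP.
  by rewrite eqn_mul2l /= => /eqP /IH ->.
Qed.

Lemma dyad_bounds (j : nat) : (1 < j)%N -> 0 < dyad_frac j < 1.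
Proof.
case: j => [|[|j]] //= _.
set h := trunc_log 2 j.+1.
have h1 : (2 ^ h <= j.+1)%N by apply: trunc_logP.
have h2 : (j.+1 < 2 ^ h.+1)%N by apply: trunc_log_ltn.
have hp : (0 < 2 ^ h.+1)%N by rewrite expn_gt0.
apply/andP; split.
  by rewrite divr_gt0 // ltr0n // addn1.
rewrite ltr_pdivrMr ?ltr0n // mul1r ltr_nat.
rewrite expnS in h2 *. lia.
Qed.

Lemma dyad_ne01 (j : nat) : (1 < j)%N -> dyad_frac j <> 0 /\ dyad_frac j <> 1.
Proof.
move=> /dyad_bounds /andP[h1 h2]; split=> E; rewrite E in h1 h2.
  by rewrite ltxx in h1.
by rewrite ltxx in h2.
Qed.

Lemma dyad_inj (a b : nat) : dyad_frac a = dyad_frac b -> a = b.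
Proof.
case: a => [|[|a]]; case: b => [|[|b]] //.
- by move=> /esym/eqP; rewrite /= oner_eq0.
- by move=> E; have [] := (@dyad_ne01 b.+2 isT); rewrite -E.
- by move=> /eqP; rewrite /= oner_eq0.
- by move=> E; have [] := (@dyad_ne01 b.+2 isT); rewrite -E.
- by move=> E; have [] := (@dyad_ne01 a.+2 isT); rewrite E.
- by move=> E; have [] := (@dyad_ne01 a.+2 isT); rewrite E.
rewrite /=.
set ha := trunc_log 2 a.+1; set hb := trunc_log 2 b.+1.
have ha1 : (2 ^ ha <= a.+1)%N by apply: trunc_logP.
have hb1 : (2 ^ hb <= b.+1)%N by apply: trunc_logP.
have pa : (2 ^ ha.+1)%N%:R != 0 :> R by rewrite pnatr_eq0 expn_eq0.
have pb : (2 ^ hb.+1)%N%:R != 0 :> R by rewrite pnatr_eq0 expn_eq0.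
move/eqP; rewrite eqr_div // -!natrM eqr_nat => /eqP E.
have Eh := odd2pow E. case: Eh => Eh. move: E; rewrite -Eh => /eqP; rewrite eqn_mul2r expn_eq0 /= => /eqP E.
rewrite -Eh in ha1.
have : (a.+1 = b.+1)%N by lia.
by case=> ->.
Qed.
Definition lag d (x : 'I_d -> R) (j : 'I_d) : {poly R} :=
  \prod_(k < d | k != j) ('X - (x k)%:P).
Definition den d (x : 'I_d -> R) (j : 'I_d) : R := \prod_(k < d | k != j) (x j - x k).
Definition interp d (x : 'I_d -> R) (v : 'I_d -> R) : {poly R} :=
  \sum_(j < d) lag x j * (v j / den x j)%:P.

Lemma lag_eval d (x : 'I_d -> R) j y : (lag x j).[y] = \prod_(k < d | k != j) (y - x k).
Proof. by rewrite /lag horner_prod; apply: eq_bigr => k _; rewrite hornerXsubC. Qed.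

Lemma den_neq0 d (x : 'I_d -> R) j : injective x -> den x j != 0.
Proof.
move=> ix; rewrite /den; apply/prodf_neq0 => k kj.
by rewrite subr_eq0; apply: contra kj => /eqP /ix ->.
Qed.

Lemma lag_node d (x : 'I_d -> R) i j : i != j -> (lag x j).[x i] = 0.
Proof.
move=> ij; rewrite lag_eval (bigD1 i) //= subrr mul0r //.
Qed.

Lemma interp_node d (x : 'I_d -> R) v i : injective x -> (interp x v).[x i] = v i.
Proof.
move=> ix; rewrite /interp horner_sum (bigD1 i) //= big1 ?addr0.
  rewrite hornerM hornerC lag_eval -/(den x i) mulrC mulrVK //.
  rewrite unitfE. exact: den_neq0.
by move=> j ji; rewrite hornerM lag_node ?mul0r // eq_sym.
Qed.

Lemma size_lag d (x : 'I_d -> R) j : (size (lag x j) <= d)%N.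
Proof.
rewrite /lag size_prod; last by move=> k _; rewrite -size_poly_eq0 size_XsubC.
rewrite (eq_bigr (fun _ => 2%N)); last by move=> k _; rewrite size_XsubC.
rewrite sum_nat_const.
have -> : #|[pred k : 'I_d | k != j]| = d.-1.
  by rewrite -[X in X.-1](card_ord d) -(cardC1 j); apply: eq_card => k.
have := ltn_ord j; lia.
Qed.

Lemma size_interp d (x : 'I_d -> R) v : (size (interp x v) <= d)%N.
Proof.
rewrite /interp; elim/big_ind: _ => [|p q hp hq|j _].
- by rewrite size_poly0.
- by apply: leq_trans (size_polyD _ _) _; rewrite geq_max hp hq.
- by rewrite mulrC mul_polyC; apply: leq_trans (size_scale_leq _ _) (size_lag _ _).
Qed.

Lemma interp_uniq d (x : 'I_d -> R) (r : {poly R}) : injective x -> (size r <= d)%N ->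
  r = interp x (fun j => r.[x j]).
Proof.
move=> ix sr; apply/eqP; rewrite -subr_eq0; apply/eqP.
apply: (@roots_geq_poly_eq0 _ _ [seq x j | j <- enum 'I_d]).
- apply/allP => z /mapP [j _ ->]; rewrite /root hornerD hornerN interp_node // subrr //.
- rewrite map_inj_uniq ?enum_uniq //.
- rewrite size_map size_enum_ord; apply: leq_trans (size_polyD _ _) _.
  by rewrite size_polyN geq_max sr size_interp.
Qed.

Lemma dyad_01 j : 0 <= dyad_frac j <= 1.
Proof.
case: j => [|[|j]]; rewrite ?lexx ?ler01 //=.
by have /andP[h1 h2] := @dyad_bounds j.+2 isT; rewrite ltW // ltW.
Qed.

Lemma I_len_gt0 d (P : tile d) : 0 < I_len P.
Proof. by rewrite /I_len invr_gt0 exprn_gt0 // ltr0n. Qed.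

Lemma absbound (a z l : R) : a <= z -> z < a + l -> `|z - (a + l / 2%:R)| <= 2^-1 * l.
Proof.
move=> h1 h2; have e2 : 2^-1 * l = l / 2%:R by rewrite mulrC. rewrite e2.
rewrite ler_norml; apply/andP; split; lra.
Qed.

Lemma ybound (y c L t : R) : `|y - (c + L / 2%:R)| <= 13%:R * L / 2%:R ->
  0 <= t * L <= L -> `|y - (c + t * L)| <= 7 * L.
Proof.
move=> + /andP[hL1 hL2].
rewrite !ler_norml => /andP[h1 h2]; apply/andP; split; lra.
Qed.

Theorem lemmaC (d : nat) (hd : (0 < d)%N) :
  exists c : R, forall (P : tile d) (q : {poly R}),
    (size q <= d)%N ->
    (forall j : 'I_d, in_alpha P j q.[xpt P j]) ->
    forall y : R, in_tildeI P y ->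
      `|q.[y] - (qP P).[y]| <= c * (I_len P)^-1.
Proof.
pose f (j : 'I_d) := dyad_frac j.
exists (\sum_(j < d) (2^-1 * \prod_(k < d | k != j) (7 / `|f j - f k|))).
move=> P q sq qa y yI.
set L := I_len P.
have Lp : 0 < L by apply: I_len_gt0.
set x := xpt P.
have ix : injective x.
  move=> i j; rewrite /x /xpt => /addrI /(mulIf (lt0r_neq0 Lp)) /dyad_inj E.
  exact: val_inj.
have eqQ : qP P = interp x (alpha_center P) by [].
set r := q - qP P.
have sr : (size r <= d)%N.
  apply: leq_trans (size_polyD _ _) _.
  by rewrite size_polyN geq_max sq eqQ size_interp.
have -> : q.[y] - (qP P).[y] = r.[y] by rewrite /r hornerD hornerN.
rewrite (interp_uniq ix sr) /interp horner_sum mulr_suml.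
apply: le_trans (ler_norm_sum _ _ _) _.
apply: ler_sum => j _.
have hrj : `|r.[x j]| <= 2^-1 * L^-1.
  rewrite /r hornerD hornerN eqQ interp_node //.
  have [h1 h2] := qa j.
  have -> : L^-1 = alpha_len P by rewrite /L /I_len /alpha_len invrK.
  move: h1 h2; rewrite /alpha_center; set a := alpha_left P j; set l := alpha_len P.
  set z := q.[xpt P j] => h1 h2.
  exact: absbound.
rewrite hornerM hornerC lag_eval mulrCA mulrC /den -prodf_div.
set K := \prod_(k < d | k != j) (7 / _).
have -> : 2^-1 * K / L = K * (2^-1 * L^-1) by rewrite mulrCA mulrA.
rewrite normrM; apply: ler_pM => //.
rewrite normr_prod; apply: ler_prod => k kj; rewrite normr_ge0 /=.
have fk := dyad_01 k; have fj := dyad_01 j.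
have -> : x j - x k = (f j - f k) * L by rewrite /x /xpt /f opprD addrACA subrr add0r mulrBl.
have fne : f j - f k != 0.
  rewrite subr_eq0; apply: contra kj => /eqP /dyad_inj E.
  by apply/eqP; apply: val_inj.
have yb : `|y - x k| <= 7 * L.
  move: yI; rewrite /in_tildeI /x /xpt -/L => yI; apply: ybound yI _.
  move: fk => /andP[f0 f1]; apply/andP; split; [exact: mulr_ge0 f0 (ltW Lp) | exact: ler_piMl (ltW Lp) f1].
rewrite normf_div normrM (gtr0_norm Lp).
have afp : 0 < `|f j - f k| by rewrite normr_gt0.
rewrite ler_pdivrMr ?mulr_gt0 //.
by rewrite mulrA mulfVK ?lt0r_neq0.
Qed.
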